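(* Let $\mathcal A\in\mathbb R^{N\times N}$ be Hurwitz and $U\in\mathbb R^{N\times N}$ be such that the unique solution $V$ of the algebraic Lyapunov equation $\mathcal AV+V\mathcal A^T+U=0$ is nonsingular. Then, with $G(s):=(sI_N-\mathcal A)^{-1}$, $$G(i\lambda)\,U\,G(i\lambda)^*=V\,G(i\lambda)^*\,V^{-1}UV^{-1}\,G(i\lambda)\,V\qquad\text{for all }\lambda\in\mathbb R .$$
   Context: $(\cdot)^*$ denotes the conjugate transpose. *)

(* Defs.v *)
From HB Require Import structures.
From mathcomp Require Import all_boot all_order all_algebra.
From mathcomp Require Import complex.
From mathcomp Require Import reals.
Set Implicit Arguments. Unset Strict Implicit. Unset Printing Implicit Defensive.
Import Order.TTheory GRing.Theory Num.Theory.
Local Open Scope ring_scope.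
Local Open Scope complex_scope.

Definition cplx_mx (R : rcfType) (m n : nat) (M : 'M[R]_(m, n)) : 'M[R[i]]_(m, n) :=
  map_mx (fun x : R => x%:C) M.

Definition ctrmx (R : rcfType) (m n : nat) (M : 'M[R[i]]_(m, n)) : 'M[R[i]]_(n, m) :=
  (map_mx (@conjc R) M)^T.

Definition hurwitz (R : rcfType) (N : nat) (A : 'M[R]_N) : Prop :=
  forall z : R[i], eigenvalue (cplx_mx A) z -> complex.Re z < 0.

Definition tfG (R : rcfType) (N : nat) (A : 'M[R]_N) (s : R[i]) : 'M[R[i]]_N :=
  invmx (s%:M - cplx_mx A).

(* Main.v *)
Require Import Defs.
From HB Require Import structures.
From mathcomp Require Import all_boot all_order all_algebra complex reals.
Import Order.TTheory GRing.Theory Num.Theory.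
Local Open Scope ring_scope.
Local Open Scope complex_scope.
Section S.
Variable R : rcfType.
Lemma cM n (X Y : 'M[R]_n) : cplx_mx (X *m Y) = cplx_mx X *m cplx_mx Y.
Proof. by rewrite /cplx_mx map_mxM. Qed.
Lemma cD n (X Y : 'M[R]_n) : cplx_mx (X + Y) = cplx_mx X + cplx_mx Y.
Proof. by rewrite /cplx_mx map_mxD. Qed.
Lemma c1 n : cplx_mx (1%:M : 'M[R]_n) = 1%:M.
Proof. by rewrite /cplx_mx map_mx1. Qed.
Lemma cT n (X : 'M[R]_n) : cplx_mx X^T = (cplx_mx X)^T.
Proof. by rewrite /cplx_mx map_trmx. Qed.
Lemma ctM n (X Y : 'M[R[i]]_n) : ctrmx (X *m Y) = ctrmx Y *m ctrmx X.
Proof. by rewrite /ctrmx map_mxM trmx_mul. Qed.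
Lemma ct1 n : ctrmx (1%:M : 'M[R[i]]_n) = 1%:M.
Proof. by rewrite /ctrmx map_mx1 trmx1. Qed.
End S.

Lemma alg (K : comNzRingType) n (M Ms G Gs Vc Vi Uc : 'M[K]_n) :
  G *m M = 1%:M -> M *m G = 1%:M -> Gs *m Ms = 1%:M -> Ms *m Gs = 1%:M ->
  Vi *m Vc = 1%:M -> Vc *m Vi = 1%:M -> Uc = M *m Vc + Vc *m Ms ->
  G *m Uc *m Gs = Vc *m Gs *m Vi *m Uc *m Vi *m G *m Vc.
Proof.
move=> GM MG GsMs MsGs ViVc VcVi ->.
rewrite mulmxDr mulmxDl !mulmxA GM mul1mx -(mulmxA _ Ms) MsGs mulmx1.
rewrite mulmxDr mulmxDl mulmxDl mulmxDl.
rewrite -!mulmxA !(mulmxA Vc Vi) VcVi mul1mx !(mulmxA Vi Vc) ViVc mul1mx.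
rewrite !(mulmxA M G) MG mul1mx !(mulmxA Gs Ms) GsMs mul1mx.
by rewrite ViVc mulmx1 !mulmxA VcVi mul1mx.
Qed.

Lemma conj_s (R : rcfType) (l : R) : conjc (l *i) = - (l *i).
Proof. by apply/eqP; rewrite eq_complex /= oppr0 !eqxx. Qed.

Lemma conj_cplx (R : rcfType) n (X : 'M[R]_n) : map_mx (@conjc R) (cplx_mx X) = cplx_mx X.
Proof. by apply/matrixP=> i j; rewrite !mxE conjc_real. Qed.

Theorem lemma7p2 (R : realType) (N : nat) (A U V : 'M[R]_N) :
  hurwitz A ->
  A *m V + V *m A^T + U = 0 ->
  V \in unitmx ->
  forall lambda : R,
    let G := tfG A (lambda *i) in
    G *m cplx_mx U *m ctrmx G =
    cplx_mx V *m ctrmx G *m cplx_mx (invmx V) *m cplx_mx U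
      *m cplx_mx (invmx V) *m G *m cplx_mx V.
Proof.
move=> hA hL hV lambda G.
set s := lambda *i.
set M := s%:M - cplx_mx A.
have Mu : M \in unitmx.
  apply: contraT => nu.
  have : eigenvalue (cplx_mx A) s.
    rewrite /eigenvalue /eigenspace kermx_eq0 row_free_unit.
    have -> : cplx_mx A - s%:M = (-1) *: M by rewrite scaleN1r opprB.
    by rewrite unitmxZ ?unitrN1.
  by move/hA; rewrite /s /= ltxx.
have GM : G *m M = 1%:M by rewrite /G /tfG mulVmx.
have MG : M *m G = 1%:M by rewrite /G /tfG mulmxV.
have GsMs : ctrmx G *m ctrmx M = 1%:M by rewrite -ctM MG ct1.
have MsGs : ctrmx M *m ctrmx G = 1%:M by rewrite -ctM GM ct1.
have ViVc : cplx_mx (invmx V) *m cplx_mx V = 1%:M by rewrite -cM mulVmx // c1.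
have VcVi : cplx_mx V *m cplx_mx (invmx V) = 1%:M by rewrite -cM mulmxV // c1.
refine (@alg _ _ _ _ _ _ _ _ _ GM MG GsMs MsGs ViVc VcVi _).
have hU : U = - (A *m V + V *m A^T) by apply/eqP; rewrite -addr_eq0 addrC hL.
have Ms : ctrmx M = (- s)%:M - (cplx_mx A)^T.
  rewrite /ctrmx /M map_mxB conj_cplx map_scalar_mx /= raddfB /= tr_scalar_mx /s; congr (_%:M - _).
  by apply/eqP; rewrite eq_complex /= oppr0 !eqxx.
rewrite Ms hU /cplx_mx map_mxN map_mxD !map_mxM map_trmx -/(cplx_mx A) -/(cplx_mx V).
rewrite /M mulmxBl mulmxBr mul_scalar_mx mul_mx_scalar scaleNr.
rewrite opprD; set X := cplx_mx A *m cplx_mx V; set Y := cplx_mx V *m _.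
by rewrite addrACA subrr add0r addrC.
Qed.
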